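(* Let $\mathcal{C}$ and $\mathcal{D}$ be fusion categories over an algebraically closed field $k$ of characteristic $0$. The assignment \[ (\mathcal{E},\,\mathcal{F},\,G)\ \mapsto\ \mathcal{S}(\mathcal{E},\mathcal{F},G):=\mathcal{E}\boxtimes_G\mathcal{F}=\bigoplus_{g\in G}\mathcal{E}_g\boxtimes\mathcal{F}_g\ \subset\ \mathcal{C}\boxtimes\mathcal{D} \] is a bijection between the set of subcategory data for $\mathcal{C}\boxtimes\mathcal{D}$ and the set of fusion subcategories of $\mathcal{C}\boxtimes\mathcal{D}$.
   Context: A fusion category is a $k$-linear semisimple rigid tensor category with finitely many isomorphism classes of simple objects, finite-dimensional Hom-spaces and simple unit object; a fusion subcategory means a full tensor subcategory; $\boxtimes$ is Deligne's tensor product. For a fusion category $\mathcal{C}$, let $\mathcal{O}(\mathcal{C})$ be the set of isomorphism classes of simple objects. A grading of $\mathcal{C}$ by a finite group $G$ is a map $\deg:\mathcal{O}(\mathcal{C})\to G$ such that whenever a simple $Z$ is contained in $X\otimes Y$ ($X,Y$ simple) one has $\deg Z=\deg X\cdot\deg Y$; it is identified with the decomposition $\mathcal{C}=\bigoplus_{g\in G}\mathcal{C}_g$, where $\mathcal{C}_g$ is the full additive subcategory generated by simples of degree $g$. The grading is faithful if $\deg$ is surjective. A subcategory datum for $\mathcal{C}\boxtimes\mathcal{D}$ consists of fusion subcategories $\mathcal{E}\subset\mathcal{C}$, $\mathcal{F}\subset\mathcal{D}$, a finite group $G$, and fixed faithful gradings of $\mathcal{E}$ and $\mathcal{F}$ by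 $G$. Two data $(\mathcal{E},\mathcal{F},G)$ and $(\mathcal{E},\mathcal{F},G')$ are identified if there is a group isomorphism $\alpha:G\to G'$ with $\mathcal{E}_g=\mathcal{E}'_{\alpha(g)}$ and $\mathcal{F}_g=\mathcal{F}'_{\alpha(g)}$ for all $g$ (where primes denote the components of the gradings by $G'$). *)

(* Defs.v *)
(* A fusion category is modelled through the data that all
   notions in the statement depend on: its set of isomorphism classes of simple
   objects O(C) (a finType), the unit, duality, and the fusion multiplicities
   N_{ij}^k = dim Hom(k, i (x) j). *)
From HB Require Import structures.
From mathcomp Require Import all_boot all_fingroup.
Set Implicit Arguments. Unset Strict Implicit. Unset Printing Implicit Defensive.

Record fusion_rules (I : finType) := FusionRules {
  f_one : I;
  f_dual : I -> I;
  f_N : I -> I -> I -> nat;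
  f_unitl : forall j k, f_N f_one j k = (j == k) :> nat;
  f_unitr : forall i k, f_N i f_one k = (i == k) :> nat;
  f_assoc : forall i j k l,
    \sum_(m : I) f_N i j m * f_N m k l = \sum_(m : I) f_N j k m * f_N i m l;
  f_dualK : forall i, f_dual (f_dual i) = i;
  f_N_one : forall i j, f_N i j f_one = (j == f_dual i) :> nat;
  f_frobl : forall i j k, f_N i j k = f_N (f_dual i) k j;
  f_frobr : forall i j k, f_N i j k = f_N k (f_dual j) i
}.

(* A fusion subcategory (full tensor subcategory, hence containing the unit and
   closed under tensor products and duals), identified with its set of simples. *)
Definition is_fusion_subcat (I : finType) (one : I) (dual : I -> I)
    (N : I -> I -> I -> nat) (S : {set I}) : Prop :=
  [/\ one \in S,
      (forall i, i \in S -> dual i \in S) &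
      (forall i j k, i \in S -> j \in S -> 0 < N i j k -> k \in S)].

Definition fusion_subcat (I : finType) (C : fusion_rules I) (S : {set I}) :=
  is_fusion_subcat (f_one C) (@f_dual _ C) (@f_N _ C) S.

(* Deligne product: simples of C \boxtimes D are pairs, fusion rules multiply. *)
Definition dp_one (I J : finType) (C : fusion_rules I) (D : fusion_rules J) : I * J :=
  (f_one C, f_one D).
Definition dp_dual (I J : finType) (C : fusion_rules I) (D : fusion_rules J)
  (p : I * J) : I * J := (f_dual C p.1, f_dual D p.2).
Definition dp_N (I J : finType) (C : fusion_rules I) (D : fusion_rules J)
  (p q r : I * J) : nat := f_N C p.1 q.1 r.1 * f_N D p.2 q.2 r.2.

Definition deligne_subcat (I J : finType) (C : fusion_rules I) (D : fusion_rules J)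
  (S : {set I * J}) : Prop :=
  is_fusion_subcat (dp_one C D) (dp_dual C D) (dp_N C D) S.

(* A G-grading of the fusion subcategory E (deg only matters on E). *)
Definition is_grading (I : finType) (C : fusion_rules I) (E : {set I})
    (gT : finGroupType) (deg : I -> gT) : Prop :=
  forall x y z, x \in E -> y \in E -> 0 < f_N C x y z -> deg z = (deg x * deg y)%g.

Definition faithful_grading (I : finType) (C : fusion_rules I) (E : {set I})
    (gT : finGroupType) (deg : I -> gT) : Prop :=
  is_grading C E deg /\ deg @: E = [set: gT].

Definition subcat_datum (I J : finType) (C : fusion_rules I) (D : fusion_rules J)
    (E : {set I}) (F : {set J}) (gT : finGroupType) (dE : I -> gT) (dF : J -> gT)
    : Prop :=
  [/\ fusion_subcat C E, fusion_subcat D F,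
      faithful_grading C E dE & faithful_grading D F dF].

Definition datum_subcat (I J : finType) (E : {set I}) (F : {set J})
    (gT : finGroupType) (dE : I -> gT) (dF : J -> gT) : {set I * J} :=
  [set p : I * J | [&& p.1 \in E, p.2 \in F & dE p.1 == dF p.2]].

Definition datum_equiv (I J : finType)
    (E : {set I}) (F : {set J}) (gT : finGroupType) (dE : I -> gT) (dF : J -> gT)
    (E' : {set I}) (F' : {set J}) (gT' : finGroupType) (dE' : I -> gT') (dF' : J -> gT')
    : Prop :=
  E = E' /\ F = F' /\
  exists alpha : gT -> gT',
    [/\ bijective alpha, {morph alpha : x y / (x * y)%g},
        {in E, forall x, dE' x = alpha (dE x)} &
        {in F, forall y, dF' y = alpha (dF y)}].

(* Main.v *)
Require Import Defs.
From mathcomp Require Import all_boot all_fingroup.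
Set Implicit Arguments. Unset Strict Implicit. Unset Printing Implicit Defensive.

Lemma sum_pos (T : finType) (F : T -> nat) : 0 < \sum_m F m -> exists m, 0 < F m.
Proof.
move=> H; case: (boolP [exists m, 0 < F m]) => [/existsP//|/existsPn H0].
rewrite big1 in H => // m _; by move: (H0 m); rewrite lt0n negbK => /eqP.
Qed.

Section FR.
Variables (I : finType) (C : fusion_rules I).
Local Notation N := (f_N C).
Local Notation d := (f_dual C).
Local Notation one := (f_one C).

Lemma N1l j : N one j j = 1. Proof. by rewrite f_unitl eqxx. Qed.
Lemma N1r j : N j one j = 1. Proof. by rewrite f_unitr eqxx. Qed.
Lemma Nd1 a : N a (d a) one = 1. Proof. by rewrite f_N_one eqxx. Qed.

Lemma G1 a b : exists m, 0 < N a b m /\ 0 < N m (d b) a.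
Proof.
have : 0 < \sum_m N a b m * N m (d b) a.
  rewrite f_assoc (bigD1 one) //= Nd1 N1r; exact: leq_addr.
by case/sum_pos => m; rewrite muln_gt0 => /andP[]; exists m.
Qed.

Lemma NZ a b : exists m, 0 < N a b m.
Proof. by case: (G1 a b) => m [] ? _; exists m. Qed.

Lemma assoc_ex u x x' t v : 0 < N u x v -> 0 < N v x' t ->
  exists m, 0 < N x x' m /\ 0 < N u m t.
Proof.
move=> h1 h2.
have : 0 < \sum_m N u x m * N m x' t.
  rewrite (bigD1 v) //=; apply: leq_trans (leq_addr _ _); by rewrite muln_gt0 h1 h2.
by rewrite f_assoc; case/sum_pos => m; rewrite muln_gt0 => /andP[]; exists m.
Qed.

Lemma grading_one (E : {set I}) (gT : finGroupType) (deg : I -> gT) :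
  fusion_subcat C E -> is_grading C E deg -> deg one = 1%g.
Proof.
case=> h1 _ _ hg; have := hg _ _ one h1 h1; rewrite N1l => /(_ isT) /esym.
by move/(canRL (mulKg _)); rewrite mulVg.
Qed.

Lemma grading_dual (E : {set I}) (gT : finGroupType) (deg : I -> gT) x :
  fusion_subcat C E -> is_grading C E deg -> x \in E -> deg (d x) = (deg x)^-1%g.
Proof.
move=> hE hg xE; have hd : d x \in E by case: hE => _ hd _; exact: hd.
have := hg _ _ one xE hd; rewrite Nd1 => /(_ isT).
rewrite (grading_one hE hg) => /esym h; apply/esym/eqP; rewrite eq_invg_mul h //.
Qed.
End FR.

Section P13.
Variables (I J : finType) (C : fusion_rules I) (D : fusion_rules J).

Lemma part1 (E : {set I}) (F : {set J}) (gT : finGroupType) (dE : I -> gT) (dF : J -> gT) :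
  subcat_datum C D E F dE dF -> deligne_subcat C D (datum_subcat E F dE dF).
Proof.
case=> hE hF [gE fE] [gF fF].
have hE' := hE; have hF' := hF; case: hE' => E1 Ed Em; case: hF' => F1 Fd Fm.
split.
- by rewrite inE /dp_one /= E1 F1 (grading_one hE gE) (grading_one hF gF) eqxx.
- move=> [x y]; rewrite !inE /dp_dual /= => /and3P[xE yF /eqP e].
  by rewrite Ed // Fd // (grading_dual hE gE xE) (grading_dual hF gF yF) e eqxx.
- move=> [x y] [x' y'] [z w]; rewrite !inE /dp_N /= => /and3P[xE yF /eqP e]
    /and3P[xE' yF' /eqP e']; rewrite muln_gt0 => /andP[h1 h2].
  by rewrite (Em _ _ _ xE xE' h1) (Fm _ _ _ yF yF' h2) (gE _ _ _ xE xE' h1)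
    (gF _ _ _ yF yF' h2) e e' eqxx.
Qed.

Lemma proj1_datum (E : {set I}) (F : {set J}) (gT : finGroupType) (dE : I -> gT) (dF : J -> gT) x :
  subcat_datum C D E F dE dF -> x \in E -> exists y, (x, y) \in datum_subcat E F dE dF.
Proof.
case=> _ _ _ [_ fF] xE.
have : dE x \in dF @: F by rewrite fF inE.
by case/imsetP => y yF e; exists y; rewrite inE /= xE yF e eqxx.
Qed.

Lemma part3 (E : {set I}) (F : {set J}) (gT : finGroupType) (dE : I -> gT) (dF : J -> gT)
          (E' : {set I}) (F' : {set J}) (gT' : finGroupType) (dE' : I -> gT') (dF' : J -> gT') :
      subcat_datum C D E F dE dF -> subcat_datum C D E' F' dE' dF' ->
      datum_subcat E F dE dF = datum_subcat E' F' dE' dF' ->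
      datum_equiv E F dE dF E' F' dE' dF'.
Proof.
move=> h h' eS.
have eE : E = E'.
  apply/setP => x; apply/idP/idP => xE.
    by case: (proj1_datum h xE) => y; rewrite eS inE => /and3P[].
  by case: (proj1_datum h' xE) => y; rewrite -eS inE => /and3P[].
have eF : F = F'.
  apply/setP => y; apply/idP/idP => yF.
    case: h => _ _ [_ fE] _.
    have : dF y \in dE @: E by rewrite fE inE.
    case/imsetP => x xE e.
    have : (x, y) \in datum_subcat E F dE dF by rewrite inE /= xE yF e eqxx.
    by rewrite eS inE => /and3P[].
  case: h' => _ _ [_ fE] _.
  have : dF' y \in dE' @: E' by rewrite fE inE.
  case/imsetP => x xE e.
  have : (x, y) \in datum_subcat E' F' dE' dF' by rewrite inE /= xE yF e eqxx.
  by rewrite -eS inE => /and3P[].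
subst E' F'.
have wd : forall x x', x \in E -> x' \in E -> dE x = dE x' -> dE' x = dE' x'.
  move=> x x' xE x'E e.
  case: (proj1_datum h xE) => y hy.
  have hy' : (x', y) \in datum_subcat E F dE dF.
    by move: hy; rewrite !inE /= x'E -e => /and3P[_ -> ->].
  move: hy hy'; rewrite eS !inE /= => /and3P[_ _ /eqP ->] /and3P[_ _ /eqP ->] //.
have wd' : forall x x', x \in E -> x' \in E -> dE' x = dE' x' -> dE x = dE x'.
  move=> x x' xE x'E e.
  case: (proj1_datum h' xE) => y hy.
  have hy' : (x', y) \in datum_subcat E F dE' dF'.
    by move: hy; rewrite !inE /= x'E -e => /and3P[_ -> ->].
  move: hy hy'; rewrite -eS !inE /= => /and3P[_ _ /eqP ->] /and3P[_ _ /eqP ->] //.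
have surjE : forall g, exists2 x, x \in E & dE x = g.
  move=> g; case: h => _ _ [_ fE] _.
  have : g \in dE @: E by rewrite fE inE.
  by case/imsetP => x xE ->; exists x.
have surjE' : forall g, exists2 x, x \in E & dE' x = g.
  move=> g; case: h' => _ _ [_ fE] _.
  have : g \in dE' @: E by rewrite fE inE.
  by case/imsetP => x xE ->; exists x.
pose alpha g := dE' (odflt (f_one C) [pick x in E | dE x == g]).
pose beta g := dE (odflt (f_one C) [pick x in E | dE' x == g]).
have alphaE : forall x, x \in E -> alpha (dE x) = dE' x.
  move=> x xE; rewrite /alpha; case: pickP => [x' /andP[x'E /eqP e]|/(_ x)] /=.
    exact: wd.
  by rewrite xE eqxx.
have betaE : forall x, x \in E -> beta (dE' x) = dE x.
  move=> x xE; rewrite /beta; case: pickP => [x' /andP[x'E /eqP e]|/(_ x)] /=.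
    exact: wd'.
  by rewrite xE eqxx.
split => //; split => //; exists alpha; split.
- exists beta.
    by move=> g; case: (surjE g) => x xE <-; rewrite alphaE // betaE.
  by move=> g; case: (surjE' g) => x xE <-; rewrite betaE // alphaE.
- move=> g1 g2; case: (surjE g1) => x xE <-; case: (surjE g2) => x' x'E <-.
  case: (NZ C x x') => z hz.
  have hE := h; have hE' := h'.
  case: hE => [[_ _ Em] _ [gE _] _]; case: hE' => [_ _ [gE' _] _].
  have zE := Em _ _ _ xE x'E hz.
  by rewrite -(gE _ _ _ xE x'E hz) !alphaE // (gE' _ _ _ xE x'E hz).
- by move=> x xE; rewrite alphaE.
- move=> y yF; case: (surjE (dF y)) => x xE e.
  have : (x, y) \in datum_subcat E F dE dF by rewrite inE /= xE yF e eqxx.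
  rewrite eS inE /= => /and3P[_ _ /eqP <-].
  by rewrite -e alphaE.
Qed.
End P13.

Section P2.
Variables (I J : finType) (C : fusion_rules I) (D : fusion_rules J).
Variable S : {set I * J}.
Hypothesis hS : deligne_subcat C D S.
Local Notation NC := (f_N C).
Local Notation ND := (f_N D).

Lemma S1 : (f_one C, f_one D) \in S.
Proof. by case: hS. Qed.
Lemma Sd x y : (x, y) \in S -> (f_dual C x, f_dual D y) \in S.
Proof. by case: hS => _ h _ /h. Qed.
Lemma Sm x y x' y' z w : (x, y) \in S -> (x', y') \in S -> 0 < NC x x' z -> 0 < ND y y' w ->
  (z, w) \in S.
Proof.
case: hS => _ _ h h1 h2 h3 h4; apply: (h _ _ _ h1 h2).
by rewrite /dp_N /= muln_gt0 h3 h4.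
Qed.

Definition EE := [set x | [exists y, (x, y) \in S]].
Definition FF := [set y | [exists x, (x, y) \in S]].
Definition AA x := [set y | (x, y) \in S].
Definition mulS (X Y : {set J}) :=
  [set w | [exists y in X, exists y' in Y, 0 < ND y y' w]].
Definition cls := [set AA x | x in EE].

Lemma EEP x : reflect (exists y, (x, y) \in S) (x \in EE).
Proof. by rewrite inE; apply: existsP. Qed.
Lemma FFP y : reflect (exists x, (x, y) \in S) (y \in FF).
Proof. by rewrite inE; apply: existsP. Qed.

Lemma EE_sub : fusion_subcat C EE.
Proof.
split.
- by apply/EEP; exists (f_one D); exact: S1.
- by move=> i /EEP[y hy]; apply/EEP; exists (f_dual D y); exact: Sd.
- move=> i j k /EEP[y hy] /EEP[y' hy'] hk; case: (NZ D y y') => w hw.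
  by apply/EEP; exists w; exact: Sm hy hy' hk hw.
Qed.

Lemma FF_sub : fusion_subcat D FF.
Proof.
split.
- by apply/FFP; exists (f_one C); exact: S1.
- by move=> i /FFP[y hy]; apply/FFP; exists (f_dual C y); exact: Sd.
- move=> i j k /FFP[y hy] /FFP[y' hy'] hk; case: (NZ C y y') => w hw.
  by apply/FFP; exists w; exact: Sm hy hy' hw hk.
Qed.

Lemma EEm x x' z : x \in EE -> x' \in EE -> 0 < NC x x' z -> z \in EE.
Proof. by case: EE_sub => _ _; apply. Qed.

Lemma mulSA u x z : u \in EE -> x \in EE -> 0 < NC u x z -> mulS (AA u) (AA x) = AA z.
Proof.
move=> /EEP[y0 hy0] xE hz; apply/setP => w; rewrite !inE; apply/idP/idP.
  case/existsP => y /andP[]; rewrite inE => hy /existsP[y' /andP[]]; rewrite inE => hy' hw.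
  exact: Sm hy hy' hz hw.
move=> hw; apply/existsP; exists y0; rewrite inE hy0 /=.
case: (NZ D (f_dual D y0) w) => y' hy'.
apply/existsP; exists y'; rewrite inE f_frobl hy' andbT.
apply: (Sm (Sd hy0) hw _ hy'); by rewrite -f_frobl.
Qed.

Lemma mul_cls u x : u \in EE -> x \in EE -> mulS (AA u) (AA x) \in cls.
Proof.
move=> uE xE; case: (NZ C u x) => z hz; rewrite (mulSA uE xE hz).
by apply/imsetP; exists z => //; exact: EEm hz.
Qed.

Lemma cls_eq x x' y : (x, y) \in S -> (x', y) \in S -> AA x = AA x'.
Proof.
suff H : forall x x', (x, y) \in S -> (x', y) \in S -> {subset AA x <= AA x'}.
  by move=> h1 h2; apply/setP => w; apply/idP/idP; apply: H.
move=> {}x {}x' h1 h2 w; rewrite !inE => hw.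
case: (G1 C x' (f_dual C x)) => m [hm1 hm2].
have hm : (m, f_one D) \in S.
  by apply: (Sm h2 (Sd h1) hm1); rewrite Nd1.
apply: (Sm hm hw); first by rewrite f_dualK in hm2.
by rewrite N1l.
Qed.

Definition rmul (X Y : {set J}) :=
  if (Y \in cls) && (X \in cls) then mulS Y X else Y.

Lemma mul_cancel u x : u \in EE -> x \in EE ->
  mulS (mulS (AA u) (AA x)) (AA (f_dual C x)) = AA u.
Proof.
move=> uE xE; case: (G1 C u x) => m [h1 h2].
have mE := EEm uE xE h1.
have dxE : f_dual C x \in EE by case: EE_sub => _ hd _; apply: hd.
by rewrite (mulSA uE xE h1) (mulSA mE dxE h2).
Qed.

Lemma rmul_inj X : injective (rmul X).
Proof.
move=> Y1 Y2; rewrite /rmul; case XC: (X \in cls); rewrite ?andbF ?andbT //.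
case/imsetP: XC => x xE ->.
case Y1C: (Y1 \in cls); case Y2C: (Y2 \in cls) => //.
- case/imsetP: Y1C => u1 u1E ->; case/imsetP: Y2C => u2 u2E -> e.
  by rewrite -(mul_cancel u1E xE) e mul_cancel.
- case/imsetP: Y1C => u1 u1E -> e.
  by move: (mul_cls u1E xE); rewrite e Y2C.
- case/imsetP: Y2C => u2 u2E -> e.
  by move: (mul_cls u2E xE); rewrite -e Y1C.
Qed.

Definition phi x : {perm {set J}} := perm (@rmul_inj (AA x)).

Lemma AA_cls x : x \in EE -> AA x \in cls.
Proof. by move=> xE; apply/imsetP; exists x. Qed.

Lemma phi_cls x u z : x \in EE -> u \in EE -> 0 < NC u x z -> phi x (AA u) = AA z.
Proof.
by move=> xE uE hz; rewrite permE /rmul AA_cls // AA_cls // (mulSA uE xE hz).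
Qed.

Lemma phi_ncls x Y : Y \notin cls -> phi x Y = Y.
Proof. by move=> /negbTE hY; rewrite permE /rmul hY. Qed.

Lemma phi_AA x x' : AA x = AA x' -> phi x = phi x'.
Proof. by move=> e; apply/permP => Y; rewrite !permE /rmul e. Qed.

Lemma phiM x x' z : x \in EE -> x' \in EE -> 0 < NC x x' z ->
  phi z = (phi x * phi x')%g.
Proof.
move=> xE x'E hz; have zE := EEm xE x'E hz.
apply/permP => Y; rewrite permM.
case YC: (Y \in cls); last by rewrite !phi_ncls ?YC.
case/imsetP: YC => u uE ->.
case: (NZ C u x) => v hv; have vE := EEm uE xE hv.
case: (NZ C v x') => t ht.
rewrite (phi_cls xE uE hv) (phi_cls x'E vE ht).
case: (assoc_ex hv ht) => m [hm1 hm2].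
have mE := EEm xE x'E hm1.
have -> : phi z = phi m.
  by apply: phi_AA; rewrite -(mulSA xE x'E hz) (mulSA xE x'E hm1).
by rewrite (phi_cls mE uE hm2).
Qed.

Lemma phi1 : phi (f_one C) = 1%g.
Proof.
apply/permP => Y; rewrite perm1.
have oE : f_one C \in EE by case: EE_sub.
case YC: (Y \in cls); last by rewrite !phi_ncls ?YC.
case/imsetP: YC => u uE ->; apply: phi_cls => //; by rewrite N1r.
Qed.

Lemma phi_inj x x' : x \in EE -> x' \in EE -> phi x = phi x' -> AA x = AA x'.
Proof.
have oE : f_one C \in EE by case: EE_sub.
move=> xE x'E e.
have h1 : 0 < NC (f_one C) x x by rewrite N1l.
have h2 : 0 < NC (f_one C) x' x' by rewrite N1l.
by rewrite -(phi_cls xE oE h1) e (phi_cls x'E oE h2).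
Qed.

Lemma oE : f_one C \in EE.
Proof. by case: EE_sub. Qed.

Lemma Hgs : group_set (phi @: EE).
Proof.
apply/group_setP; split.
  by apply/imsetP; exists (f_one C); rewrite ?phi1 // oE.
move=> p q /imsetP[x xE ->] /imsetP[x' x'E ->]; case: (NZ C x x') => z hz.
by apply/imsetP; exists z; [exact: EEm hz | by rewrite (phiM xE x'E hz)].
Qed.

Definition HH := Group Hgs.
Definition xpick y := odflt (f_one C) [pick x | (x, y) \in S].
Definition psi y := phi (xpick y).

Lemma xpickS y : y \in FF -> (xpick y, y) \in S.
Proof.
case/FFP => x hx; rewrite /xpick; case: pickP => [x' //|/(_ x)]; by rewrite hx.
Qed.

Lemma xpickE y : xpick y \in EE.
Proof.
rewrite /xpick; case: pickP => [x' h|_] /=; last exact: oE.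
by apply/EEP; exists y.
Qed.

Lemma psiE x y : (x, y) \in S -> psi y = phi x.
Proof.
move=> hxy; rewrite /psi; apply: phi_AA.
have yF : y \in FF by apply/FFP; exists x.
exact: cls_eq (xpickS yF) hxy.
Qed.

Lemma phiH x : x \in EE -> phi x \in HH.
Proof. by move=> xE; apply/imsetP; exists x. Qed.
Lemma psiH y : psi y \in HH.
Proof. exact/phiH/xpickE. Qed.

Lemma part2_sec : exists (gT : finGroupType) (E : {set I}) (F : {set J}) (dE : I -> gT) (dF : J -> gT),
        subcat_datum C D E F dE dF /\ S = datum_subcat E F dE dF.
Proof.
exists (subg_of HH), EE, FF, (fun x => subg HH (phi x)), (fun y => subg HH (psi y)).
split; first split.
- exact: EE_sub.
- exact: FF_sub.
- split.
    move=> x x' z xE x'E hz.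
    by rewrite (phiM xE x'E hz) subgM // phiH.
  apply/setP => u; rewrite inE; apply/imsetP.
  have := subgP u; case/imsetP => x xE e.
  by exists x => //; rewrite -[u]sgvalK e.
- split.
    move=> y y' w /FFP[x hx] /FFP[x' hx'] hw.
    case: (NZ C x x') => z hz.
    have xE : x \in EE by apply/EEP; exists y.
    have x'E : x' \in EE by apply/EEP; exists y'.
    rewrite (psiE hx) (psiE hx') (psiE (Sm hx hx' hz hw)) (phiM xE x'E hz).
    by rewrite subgM // phiH.
  apply/setP => u; rewrite inE; apply/imsetP.
  have := subgP u; case/imsetP => x /EEP[y hy] e.
  exists y; first by apply/FFP; exists x.
  by rewrite -[u]sgvalK e (psiE hy).
- apply/setP => [[x y]]; rewrite inE /=; apply/idP/idP.
    move=> hxy; rewrite (psiE hxy) eqxx andbT.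
    by apply/andP; split; [apply/EEP; exists y | apply/FFP; exists x].
  case/and3P => xE yF /eqP e.
  have e' : phi x = psi y by move: (congr1 val e); rewrite !subgK ?psiH ?phiH.
  have := phi_inj xE (xpickE y) e'.
  move/setP/(_ y); rewrite !inE (xpickS yF) => -> //.
Qed.
End P2.
Theorem theorem2p2 (I J : finType) (C : fusion_rules I) (D : fusion_rules J) :
  (* well defined: S(E,F,G) is a fusion subcategory of C \boxtimes D *)
  (forall (E : {set I}) (F : {set J}) (gT : finGroupType) (dE : I -> gT) (dF : J -> gT),
      subcat_datum C D E F dE dF -> deligne_subcat C D (datum_subcat E F dE dF)) /\
  (* surjective *)
  (forall S : {set I * J}, deligne_subcat C D S ->
      exists (gT : finGroupType) (E : {set I}) (F : {set J}) (dE : I -> gT) (dF : J -> gT),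
        subcat_datum C D E F dE dF /\ S = datum_subcat E F dE dF) /\
  (* injective up to identification of data *)
  (forall (E : {set I}) (F : {set J}) (gT : finGroupType) (dE : I -> gT) (dF : J -> gT)
          (E' : {set I}) (F' : {set J}) (gT' : finGroupType) (dE' : I -> gT') (dF' : J -> gT'),
      subcat_datum C D E F dE dF -> subcat_datum C D E' F' dE' dF' ->
      datum_subcat E F dE dF = datum_subcat E' F' dE' dF' ->
      datum_equiv E F dE dF E' F' dE' dF').
Proof.
split; first exact: (@part1 _ _ C D).
split; first by move=> S hS; exact: part2_sec.
exact: (@part3 _ _ C D).
Qed.
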